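(* Let $S$ be a commutative ring, $X=\begin{pmatrix}a&b\\c&a\end{pmatrix}\in R=\mathbb{M}_2(S)$, and assume $bS+cS=rS$ for some $r\in S$. Then $$\{-\det[X,Y]: Y\in R\}=V[r^2,-bc].$$ If $b,c$ are coprime in $S$ (i.e. $bS+cS=S$), this set equals $V[1,-bc]$.
   Context: $[X,Y]=XY-YX$. For $s,\delta\in S$, $V[s,\delta]=\{s r_1^2+\delta r_2^2 : r_1,r_2\in S\}$. *)

(* Defs.v *)
From HB Require Import structures.
From mathcomp Require Import all_boot all_order all_algebra.
Set Implicit Arguments. Unset Strict Implicit. Unset Printing Implicit Defensive.
Import GRing.Theory.
Local Open Scope ring_scope.

Definition mx2 (S : comNzRingType) (p q u v : S) : 'M[S]_2 :=
  \matrix_(i < 2, j < 2)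
    (if (i == 0 :> nat) then (if (j == 0 :> nat) then p else q)
     else (if (j == 0 :> nat) then u else v)).

Definition commx (S : comNzRingType) (X Y : 'M[S]_2) : 'M[S]_2 :=
  X *m Y - Y *m X.

Definition Vset (S : comNzRingType) (s d : S) (z : S) : Prop :=
  exists r1 r2 : S, z = s * r1 ^+ 2 + d * r2 ^+ 2.

(* Main.v *)
Require Import Defs.
From mathcomp Require Import all_boot all_order all_algebra.
Import GRing.Theory.
Local Open Scope ring_scope.
Lemma comm_entries (S : comNzRingType) (a b c : S) (Y : 'M[S]_2) :
  let X := commx (mx2 a b c a) Y in
  [/\ X 0 0 = b * Y 1 0 - c * Y 0 1, X 0 1 = b * (Y 1 1 - Y 0 0),
      X 1 0 = - (c * (Y 1 1 - Y 0 0)) & X 1 1 = - (b * Y 1 0 - c * Y 0 1)].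
Proof.
rewrite /commx /mx2 /=; rewrite !mxE !big_ord_recl !big_ord0 !mxE /=.
have -> : lift ord0 ord0 = 1 :> 'I_2 by apply: val_inj.
set x := Y 0 0; set y := Y 0 1; set z := Y 1 0; set w := Y 1 1.
rewrite !addr0; split.
- by rewrite [x*a]mulrC [y*c]mulrC opprD addrACA subrr add0r.
- by rewrite [x*b]mulrC [y*a]mulrC mulrBr opprD [-(b*x) - _]addrC addrACA subrr add0r.
- by rewrite [z*a]mulrC [w*c]mulrC mulrBr opprB opprD [-(a*z) - _]addrC addrACA subrr addr0.
- by rewrite [z*b]mulrC [w*a]mulrC opprB opprD addrACA subrr addr0.
Qed.
Lemma det2 (S : comNzRingType) (A : 'M[S]_2) : \det A = A 0 0 * A 1 1 - A 0 1 * A 1 0.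
Proof.
rewrite (expand_det_row _ 0) !big_ord_recl big_ord0 /cofactor !det_mx11 !mxE /=.
rewrite expr0 expr1 mul1r mulN1r.
rewrite addr0 mulrN; congr (_ * A _ _ - _ * A _ _);  (try congr (A _ _)); by apply: val_inj.
Qed.
Lemma key (S : comNzRingType) (a b c : S) (Y : 'M[S]_2) :
  - \det (commx (mx2 a b c a) Y) =
  (b * Y 1 0 - c * Y 0 1) ^+ 2 + - (b * c) * (Y 1 1 - Y 0 0) ^+ 2.
Proof.
have [e1 e2 e3 e4] := @comm_entries S a b c Y.
rewrite det2 e1 e2 e3 e4; set u := (b * Y 1 0 - c * Y 0 1); set v := Y 1 1 - Y 0 0.
by rewrite !mulrN opprK opprD opprK mulNr mulrACA !expr2.
Qed.

Theorem proposition5p16 (S : comNzRingType) (a b c r : S)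
  (hr : forall z : S, (exists x y : S, z = b * x + c * y) <-> (exists t : S, z = r * t)) :
  (forall z : S,
     (exists Y : 'M[S]_2, z = - \det (commx (mx2 a b c a) Y)) <->
     Vset (r ^+ 2) (- (b * c)) z)
  /\
  ((forall z : S, exists x y : S, z = b * x + c * y) ->
   forall z : S,
     (exists Y : 'M[S]_2, z = - \det (commx (mx2 a b c a) Y)) <->
     Vset 1 (- (b * c)) z).
Proof.
have P1 : forall z : S,
     (exists Y : 'M[S]_2, z = - \det (commx (mx2 a b c a) Y)) <->
     Vset (r ^+ 2) (- (b * c)) z.
  move=> z; split.
  - move=> [Y ->]; rewrite key.
    have [t ht] : exists t, b * Y 1 0 - c * Y 0 1 = r * t.
      by apply/hr; exists (Y 1 0), (- Y 0 1); rewrite mulrN.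
    by exists t, (Y 1 1 - Y 0 0); rewrite ht exprMn.
  - move=> [r1 [r2 ->]].
    have [x [y hxy]] : exists x y, r * r1 = b * x + c * y by apply/hr; exists r1.
    exists (mx2 0 (- y) x r2); rewrite key /mx2 !mxE /= subr0 mulrN opprK -hxy.
    by rewrite exprMn.
split=> // hcop z; apply: (iff_trans (P1 z)); split.
- by move=> [r1 [r2 ->]]; exists (r * r1), r2; rewrite mul1r exprMn.
- move=> [s1 [r2 ->]]; have [t ht] := (proj1 (hr s1)) (hcop s1).
  by exists t, r2; rewrite mul1r ht exprMn.
Qed.
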